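(* Let $(l,k,b)$ be a suspension triplet for $(X_A,\sigma_A)$ and $c=l-k$. If $c'\in C(X_A,\mathbb Z)$ satisfies $[c]=[c']$ in $H^A$, then there exist a suspension triplet $(l',k',b')$ for $(X_A,\sigma_A)$ with $c'=l'-k'$ and a homeomorphism $\Phi:S^{l,k}_{A,b}\to S^{l',k'}_{A,b'}$ such that $\Phi\circ b_A=b'_A$ and $\Phi\circ\phi_{A,t}=\phi_{A,t}\circ\Phi$ for all $t\in\mathbb R_+$, where $b_A(x)=[x,b(x)]\in S^{l,k}_{A,b}$ and $b'_A(x)=[x,b'(x)]\in S^{l',k'}_{A,b'}$ are the base maps.
   Context: Let $N>1$ and $A$ an irreducible $N\times N$ $\{0,1\}$-matrix which is not a permutation matrix. $X_A$ is the compact space of sequences $(x_n)_{n\in\mathbb N}$, $x_n\in\{1,\dots,N\}$, $A(x_n,x_{n+1})=1$, with $\sigma_A((x_n)_n)=(x_{n+1})_n$. $\mathbb Z_+$, $\mathbb R_+$ are nonnegative integers/reals. $H^A$ is the quotient of $C(X_A,\mathbb Z)$ by $\{u-u\circ\sigma_A: u\in C(X_A,\mathbb Z)\}$, $[f]$ the class, $H^A_+$ the classes of $\mathbb Z_+$-valued continuous functions; $[f]\in H^A_+$ is an order unit if for every $[u]\in H^A$ some $n\in\mathbb N$ has $n[f]-[u]\in H^A_+$. A suspension triplet is $(l,k,b)$ with $l,k\in C(X_A,\mathbb R_+)$, $b\in C(X_A,\mathbb R)$ such that $c=l-k$ is integer-valued with $[c]$ an order unit, and $l-b$, $k-b\circ\sigma_A$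 take values in $\mathbb Z_+$. $S^{l,k}_{A,b}$ is the quotient of $\{(x,r)\in X_A\times\mathbb R: r\ge b(x)\}$ by the equivalence relation generated by $(x,r)\sim(\sigma_A(x),r-c(x))$ whenever $r\ge l(x)$, with classes $[x,r]$ and flow $\phi_{A,t}([x,r])=[x,r+t]$, $t\in\mathbb R_+$. *)

(* Defs.v *)
From HB Require Import structures.
From mathcomp Require Import all_boot all_order all_algebra.
From mathcomp Require Import all_classical all_reals all_analysis.
From Stdlib Require Import Relation_Operators.

Set Implicit Arguments.
Unset Strict Implicit.
Unset Printing Implicit Defensive.

Import Order.TTheory GRing.Theory Num.Theory.
Import numFieldTopology.Exports.
Local Open Scope classical_set_scope.
Local Open Scope ring_scope.

(** The full shift space on the alphabet 'I_N = {0,...,N-1} (standing for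
    {1,...,N}), with the product of discrete topologies. *)
Definition seqspace (N : nat) : Type :=
  prod_topology (fun _ : nat => discrete_topology 'I_N).

Definition irreducible_mx (N : nat) (A : 'M[int]_N) : Prop :=
  forall i j : 'I_N, exists n : nat, 0 < (A ^+ n.+1) i j.

Definition XA (N : nat) (A : 'M[int]_N) : set (seqspace N) :=
  [set x | forall n : nat, A (x n) (x n.+1) = 1].

Definition shiftA (N : nat) (x : seqspace N) : seqspace N :=
  (fun n : nat => x n.+1) : seqspace N.

Section Defs.
Variables (R : realType) (N : nat) (A : 'M[int]_N).

(** f : X_A -> R continuous (values off X_A are irrelevant) *)
Definition contR (f : seqspace N -> R) : Prop := {within XA A, continuous f}.

Definition contZ (f : seqspace N -> R) : Prop :=
  contR f /\ forall x, XA A x -> f x \is a Num.int.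

Definition contZp (f : seqspace N -> R) : Prop :=
  contR f /\ forall x, XA A x -> f x \is a Num.nat.

Definition cohomologous (f g : seqspace N -> R) : Prop :=
  exists u, contZ u /\ forall x, XA A x -> f x - g x = u x - u (shiftA x).

Definition Hpos (f : seqspace N -> R) : Prop :=
  exists g, contZp g /\ cohomologous f g.

Definition order_unit (f : seqspace N -> R) : Prop :=
  Hpos f /\
  forall u, contZ u -> exists n : nat, Hpos (fun x => f x *+ n - u x).

Definition suspension_triplet (l k b : seqspace N -> R) : Prop :=
  [/\ contR l /\ contR k /\ contR b,
      (forall x, XA A x -> 0 <= l x /\ 0 <= k x),
      contZ (l \- k) /\ order_unit (l \- k),
      (forall x, XA A x -> l x - b x \is a Num.nat) &
      (forall x, XA A x -> k x - b (shiftA x) \is a Num.nat)].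

Definition Tsp : Type := (seqspace N * R)%type.

Definition Dom (b : seqspace N -> R) : set Tsp :=
  [set p | XA A p.1 /\ b p.1 <= p.2].

Definition susp_step (l k b : seqspace N -> R) (p q : Tsp) : Prop :=
  [/\ Dom b p, l p.1 <= p.2 & q = (shiftA p.1, p.2 - (l p.1 - k p.1))].

Definition susp_eqv (l k b : seqspace N -> R) : Tsp -> Tsp -> Prop :=
  clos_refl_sym_trans Tsp (susp_step l k b).

Definition is_class (l k b : seqspace N -> R) (C : set Tsp) : Prop :=
  exists p, Dom b p /\ C = susp_eqv l k b p.

Definition susp (l k b : seqspace N -> R) : Type :=
  {C : set Tsp | is_class l k b C}.

End Defs.

Section SuspTopology.
Variables (R : realType) (N : nat) (A : 'M[int]_N) (l k b : seqspace N -> R).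

Local Notation eqv := (susp_eqv A l k b).
Local Notation S := (susp A l k b).

Lemma susp_eqv_sym p q : eqv p q -> eqv q p.
Proof. exact: rst_sym. Qed.

Lemma susp_eqv_trans p q r : eqv p q -> eqv q r -> eqv p r.
Proof. exact: rst_trans. Qed.

Lemma susp_class_eq (C1 C2 : S) p : sval C1 p -> sval C2 p -> C1 = C2.
Proof.
case: C1 => [S1 H1]; case: C2 => [S2 H2] /= h1 h2.
have E : S1 = S2.
  case: H1 => p1 [_ E1]; case: H2 => p2 [_ E2].
  rewrite E1 in h1; rewrite E2 in h2; rewrite E1 E2.
  apply/funext => q; apply/propext; split => h.
  - exact: susp_eqv_trans h2 (susp_eqv_trans (susp_eqv_sym h1) h).
  - exact: susp_eqv_trans h1 (susp_eqv_trans (susp_eqv_sym h2) h).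
subst S2; congr exist; exact: Prop_irrelevance.
Qed.

Definition susp_cls (p : Tsp R N) (hp : Dom A b p) : S :=
  exist _ (eqv p) (ex_intro _ p (conj hp erefl)).

Definition susp_pre (W : set S) : set (subspace (Dom A b)) :=
  [set p | Dom A b p /\ exists C : S, W C /\ sval C p].

Definition susp_open (W : set S) : Prop := open (susp_pre W).

End SuspTopology.

HB.instance Definition _ (R : realType) N A l k b :=
  gen_eqMixin (@susp R N A l k b).
HB.instance Definition _ (R : realType) N A l k b :=
  gen_choiceMixin (@susp R N A l k b).

Section SuspTopology2.
Variables (R : realType) (N : nat) (A : 'M[int]_N) (l k b : seqspace N -> R).
Local Notation S := (susp A l k b).
Local Notation sopen := (@susp_open R N A l k b).

Lemma susp_openT : sopen [set: S].
Proof.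
rewrite /susp_open (_ : susp_pre _ = Dom A b); first exact: open_subspaceT.
apply/funext => p; apply/propext; split; first by case.
by move=> hp; split => //; exists (susp_cls l k hp); split => //=; exact: rst_refl.
Qed.

Lemma susp_openI : setI_closed (sopen).
Proof.
move=> W1 W2 o1 o2; rewrite /susp_open.
rewrite (_ : susp_pre _ = (@susp_pre R N A l k b W1) `&` (@susp_pre R N A l k b W2)).
  exact: openI.
apply/funext => p; apply/propext; split.
  by case=> hp [C [[w1 w2] hC]]; split; split => //; exists C.
case=> [[hp [C1 [w1 h1]]] [_ [C2 [w2 h2]]]]; split => //; exists C1.
by split => //; split => //; rewrite (susp_class_eq h1 h2).
Qed.

Lemma susp_open_bigU (I : Type) (f : I -> set S) :
  (forall i, sopen (f i)) -> sopen (\bigcup_i f i).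
Proof.
move=> hf; rewrite /susp_open.
rewrite (_ : susp_pre _ = \bigcup_i @susp_pre R N A l k b (f i)).
  by apply: bigcup_open => i _; exact: hf.
apply/funext => p; apply/propext; split.
  by case=> hp [C [[i _ fi] hC]]; exists i => //; split => //; exists C.
by case=> i _ [hp [C [fi hC]]]; split => //; exists C; split => //; exists i.
Qed.

End SuspTopology2.

HB.instance Definition _ (R : realType) N A l k b :=
  isOpenTopological.Build (@susp R N A l k b)
    (@susp_openT R N A l k b) (@susp_openI R N A l k b)
    (@susp_open_bigU R N A l k b).

Section SuspFlow.
Variables (R : realType) (N : nat) (A : 'M[int]_N) (l k b : seqspace N -> R).
Local Notation eqv := (susp_eqv A l k b).
Local Notation S := (susp A l k b).

Definition tshift (t : R) (p : Tsp R N) : Tsp R N := (p.1, p.2 + t).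

Lemma susp_step_shift (t : R) p q : 0 <= t ->
  susp_step A l k b p q -> susp_step A l k b (tshift t p) (tshift t q).
Proof.
move=> t0 [[hx hb] hl ->]; split => /=.
- by split => //; rewrite (le_trans hb) // lerDl.
- by rewrite (le_trans hl) // lerDl.
- by rewrite /tshift /=; congr pair; rewrite addrAC.
Qed.

Lemma susp_eqv_shift (t : R) p q : 0 <= t -> eqv p q -> eqv (tshift t p) (tshift t q).
Proof.
move=> t0; elim=> [p' q' h| p'|p' q' _ ih|p' q' r' _ ih1 _ ih2].
- by apply: rst_step; exact: susp_step_shift.
- exact: rst_refl.
- exact: rst_sym.
- exact: rst_trans ih1 ih2.
Qed.

Lemma susp_flow_class (t : {nonneg R}) (C : S) :
  is_class A l k b [set q | exists p, sval C p /\ eqv (tshift t%:num p) q].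
Proof.
case: C => S1 H /=; case: H => p0 [hp0 ->].
exists (tshift t%:num p0); split.
  case: hp0 => hx hb; split => //=; rewrite (le_trans hb) // lerDl //.
apply/funext => q; apply/propext; split.
  case=> p [h1 h2]; apply: rst_trans h2.
  exact: susp_eqv_shift.
by move=> h; exists p0; split => //; exact: rst_refl.
Qed.

Definition susp_flow (t : {nonneg R}) (C : S) : S :=
  exist _ _ (susp_flow_class t C).

Lemma base_dom (x : seqspace N) : XA A x -> Dom A b (x, b x).
Proof. by move=> hx; split. Qed.

Definition susp_base (x : seqspace N) (hx : XA A x) : S :=
  susp_cls l k (base_dom hx).

End SuspFlow.

Definition homeomorphism (X Y : topologicalType) (f : X -> Y) : Prop :=
  continuous f /\ exists g : Y -> X, [/\ continuous g, cancel f g & cancel g f].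

(* Main.v *)
Require Import Defs.
From HB Require Import structures.
From mathcomp Require Import all_boot all_order all_algebra.
From mathcomp Require Import all_classical all_reals all_analysis.
Import Order.TTheory GRing.Theory Num.Theory.
From Stdlib Require Import Relation_Operators.
From mathcomp Require Import ring lra.
Import numFieldTopology.Exports.
Local Open Scope classical_set_scope.
Local Open Scope ring_scope.

Section Lift.
Variables (R : realType) (N : nat) (A : 'M[int]_N) (l k b l2 k2 b2 : seqspace N -> R).
Variable (T : Tsp R N -> Tsp R N).
Hypothesis TD : forall p, Dom A b p -> Dom A b2 (T p).
Hypothesis Tstep : forall p q, susp_step A l k b p q -> susp_step A l2 k2 b2 (T p) (T q).

Lemma T_eqv p q : susp_eqv A l k b p q -> susp_eqv A l2 k2 b2 (T p) (T q).
Proof.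
elim=> [p' q' h| p'|p' q' _ ih|p' q' r' _ ih1 _ ih2].
- by apply: rst_step; exact: Tstep.
- exact: rst_refl.
- exact: rst_sym.
- exact: rst_trans ih1 ih2.
Qed.

Lemma lift_class (C : susp A l k b) :
  is_class A l2 k2 b2 [set q | exists p, sval C p /\ susp_eqv A l2 k2 b2 (T p) q].
Proof.
case: C => S1 H /=; case: H => p0 [hp0 ->].
exists (T p0); split; first exact: TD.
apply/funext => q; apply/propext; split.
  case=> p [h1 h2]; apply: rst_trans h2; exact: T_eqv.
by move=> h; exists p0; split => //; exact: rst_refl.
Qed.

Definition lift (C : susp A l k b) : susp A l2 k2 b2 := exist _ _ (lift_class C).

Lemma lift_mem C p : sval C p -> sval (lift C) (T p).
Proof. by move=> h; exists p; split => //; exact: rst_refl. Qed.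

Lemma class_rep (C : susp A l k b) : exists p, Dom A b p /\ sval C p.
Proof.
case: C => S1 [p [hp E]] /=; exists p; split => //; rewrite E; exact: rst_refl.
Qed.

Lemma lift_pre (W : set (susp A l2 k2 b2)) :
  susp_pre (lift @^-1` W) = Dom A b `&` T @^-1` (susp_pre W).
Proof.
apply/funext => p; apply/propext; split.
  case=> hp [C [WC Cp]]; split => //; split; first exact: TD.
  by exists (lift C); split => //; exact: lift_mem.
case=> hp [_ [C [WC Cp]]]; split => //.
exists (susp_cls l k hp); split => //.
rewrite /preimage /=.
suff -> : lift (susp_cls l k hp) = C by [].
apply: (susp_class_eq _ Cp); apply: lift_mem; exact: rst_refl.
exact: rst_refl.
Qed.

Hypothesis Tcont : {within Dom A b, continuous T}.

Lemma lift_cont : continuous lift.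
Proof.
apply/continuousP => W oW.
change (open (susp_pre (lift @^-1` W))); rewrite lift_pre.
have : open (susp_pre W) := oW.
case/open_subspaceP => V oV VE.
have -> : Dom A b `&` T @^-1` susp_pre W = Dom A b `&` T @^-1` V.
  apply/funext => p; apply/propext; split => -[hp hT]; split => //.
    have : (susp_pre W `&` Dom A b2) (T p) by split => //; exact: TD.
    by rewrite -VE => -[].
  have : (V `&` Dom A b2) (T p) by split => //; exact: TD.
  by rewrite VE => -[].
apply: openI; first exact: open_subspaceT.
by move/continuousP: Tcont; apply.
Qed.
End Lift.
Lemma seq_cvg N (F : set_system (seqspace N)) (t : seqspace N) : Filter F ->
  (forall i, (fun f : seqspace N => f i) @ F --> (t i : discrete_topology 'I_N)) -> F --> t.
Proof.
move=> FF h; apply/cvg_sup => i U /=.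
move=> hU; move: hU; rewrite /nbhs /= => -[B [[V oV VB] Bt BU]].
apply: (filterS BU); rewrite -VB.
apply: (h i); apply: open_nbhs_nbhs; split => //.
by rewrite -VB in Bt.
Qed.
Lemma shift_cont N : continuous (@shiftA N).
Proof.
move=> x; apply: (@seq_cvg N (@shiftA N @ (nbhs x)) (shiftA x)) => i U hU.
exact: (@proj_continuous nat (fun _ => discrete_topology 'I_N) i.+1 x U hU).
Qed.

Lemma comp_within (X Y Z : topologicalType) (g : X -> Y) (f : Y -> Z) (P : set X) (Q : set Y) :
  continuous g -> (forall x, P x -> Q (g x)) -> {within Q, continuous f} ->
  {within P, continuous (f \o g)}.
Proof.
move=> hg gPQ /subspace_continuousP hf; apply/subspace_continuousP => x Px W hW.
have := hf (g x) (gPQ x Px) W hW.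
rewrite /= /within /= => h1.
have h2 := hg x _ h1.
rewrite /= nbhs_simpl /=.
suff : nbhs x [set y | P y -> W (f (g y))] by [].
have h3 : nbhs x (g @^-1` [set t | Q t -> W (f t)]) := h2.
apply: (filterS _ h3) => y /= hy Py; exact: hy (gPQ y Py).
Qed.

Lemma fst_continuous (X Y : topologicalType) : continuous (@fst X Y).
Proof. by move=> [x y]; exact: cvg_fst. Qed.
Lemma snd_continuous (X Y : topologicalType) : continuous (@snd X Y).
Proof. by move=> [x y]; exact: cvg_snd. Qed.

Section ContR.
Variables (R : realType) (N : nat) (A : 'M[int]_N).
Lemma contRD (f g : seqspace N -> R) : contR A f -> contR A g -> contR A (fun x => f x + g x).
Proof.
move=> /subspace_continuousP hf /subspace_continuousP hg; apply/subspace_continuousP => x hx.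
exact: cvgD (hf x hx) (hg x hx).
Qed.
Lemma contRB (f g : seqspace N -> R) : contR A f -> contR A g -> contR A (fun x => f x - g x).
Proof.
move=> /subspace_continuousP hf /subspace_continuousP hg; apply/subspace_continuousP => x hx.
exact: cvgB (hf x hx) (hg x hx).
Qed.
Lemma contRc (c : R) : contR A (fun _ => c).
Proof. apply/subspace_continuousP => x hx; exact: cvg_cst. Qed.
Lemma contRMn (f : seqspace N -> R) n : contR A f -> contR A (fun x => f x *+ n).
Proof.
move=> /subspace_continuousP hf; apply/subspace_continuousP => x hx.
exact: cvgMn (hf x hx).
Qed.
Lemma XA_shift x : XA A x -> XA A (shiftA x).
Proof. by move=> h n; exact: h. Qed.
Lemma contR_shift (f : seqspace N -> R) : contR A f -> contR A (fun x => f (shiftA x)).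
Proof.
move=> hf; apply: (@comp_within _ _ _ (@shiftA N) f _ (XA A)) => //.
- exact: shift_cont.
- exact: XA_shift.
Qed.

Lemma T_cont (b u : seqspace N -> R) (M : R) : contR A u ->
  {within Dom A b, continuous (fun p : Tsp R N => (p.1, p.2 - u p.1 + M))}.
Proof.
move=> hu.
have hu1 : {within Dom A b, continuous (u \o fst)}.
  apply: (@comp_within _ _ _ fst u _ (XA A)) => //.
  - exact: fst_continuous.
  - by move=> p [].
move/subspace_continuousP: hu1 => hu1.
apply/subspace_continuousP => p hp.
rewrite /from_subspace /= in hu1 *.
have h1 : (fun q : Tsp R N => q.1) @ within (Dom A b) (nbhs p) --> p.1.
  have h0 := @fst_continuous (seqspace N) R p.
  apply: (cvg_trans _ h0); apply: cvg_app; exact: cvg_within.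
have h2 : (fun q : Tsp R N => q.2 - u q.1 + M) @ within (Dom A b) (nbhs p) --> p.2 - u p.1 + M.
  apply: cvgD; last exact: cvg_cst.
  apply: cvgB; last exact: hu1.
  have h0 := @snd_continuous (seqspace N) R p.
  apply: (cvg_trans _ h0); apply: cvg_app; exact: cvg_within.
have := cvg_pair h1 h2.
move=> h; apply: h; exact: _.
Qed.
End ContR.
Lemma XA_closed N (A : 'M[int]_N) : closed (XA A).
Proof.
move=> x clx n.
have nb : nbhs x [set y : seqspace N | y n = x n /\ y n.+1 = x n.+1].
  apply: filterI.
  - exact: (@proj_continuous nat _ n x [set z | z = x n] (discrete_set1 _)).
  - exact: (@proj_continuous nat _ n.+1 x [set z | z = x n.+1] (discrete_set1 _)).
have [y [Xy [e1 e2]]] := clx _ nb.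
by rewrite -e1 -e2.
Qed.

Lemma XA_compact N (A : 'M[int]_N) : compact (XA A).
Proof.
apply: (@subclosed_compact _ _ [set: seqspace N]); [exact: XA_closed| |by []].
have := @tychonoff nat (fun _ => discrete_topology 'I_N) (fun _ => setT) _.
rewrite (_ : [set f | _] = setT); last by apply/funext=> f; apply/propext.
apply; move=> _; apply: finite_compact; exact: finite_finset.
Qed.

Lemma bound_above (R : realType) N (A : 'M[int]_N) (u : seqspace N -> R) :
  contR A u -> exists M, forall x, XA A x -> u x <= M.
Proof.
move=> hu.
have cpt := continuous_compact hu (XA_compact _ A).
have := compact_bounded cpt.
case=> M0 [_ hM0].
exists (M0 + 1) => x hx.
have ltt : M0 < M0 + 1 by rewrite ltrDl.
have := hM0 (M0 + 1) ltt (u x) (ex_intro2 _ _ x hx erefl).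
move=> /= h; exact: le_trans (ler_norm _) h.
Qed.

Section Coh.
Variables (R : realType) (N : nat) (A : 'M[int]_N).
Lemma contZB (f g : seqspace N -> R) : contZ A f -> contZ A g -> contZ A (fun x => f x - g x).
Proof.
move=> [cf zf] [cg zg]; split; first exact: contRB.
by move=> x hx; apply: rpredB; [exact: zf|exact: zg].
Qed.
Lemma contZMn (f : seqspace N -> R) n : contZ A f -> contZ A (fun x => f x *+ n).
Proof.
move=> [cf zf]; split; first exact: contRMn.
by move=> x hx; apply: rpredMn; exact: zf.
Qed.
Lemma Hpos_coh (f g w : seqspace N -> R) : contZ A w ->
  (forall x, XA A x -> f x - g x = w x - w (shiftA x)) -> Hpos A f -> Hpos A g.
Proof.
move=> cw hw [h [ch [v [cv hv]]]]; exists h; split => //.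
exists (fun x => v x - w x); split; first exact: contZB.
move=> x hx; have := hw x hx; have := hv x hx; lra.
Qed.
End Coh.

Theorem lemma2p6 (R : realType) (N : nat) (A : 'M[int]_N)
  (hN : (1 < N)%N)
  (hA01 : forall i j : 'I_N, A i j = 0 \/ A i j = 1)
  (hirr : irreducible_mx A)
  (hnperm : ~~ is_perm_mx A)
  (l k b : seqspace N -> R)
  (htrip : suspension_triplet A l k b)
  (c' : seqspace N -> R)
  (hc' : contZ A c')
  (hcoh : cohomologous A (l \- k) c') :
  exists (l' k' b' : seqspace N -> R),
    [/\ suspension_triplet A l' k' b',
        (forall x, XA A x -> c' x = l' x - k' x) &
        exists Phi : susp A l k b -> susp A l' k' b',
          [/\ homeomorphism Phi,
              (forall (x : seqspace N) (hx : XA A x),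
                  Phi (susp_base l k b hx) = susp_base l' k' b' hx) &
              (forall (t : {nonneg R}) (C : susp A l k b),
                  Phi (susp_flow t C) = susp_flow t (Phi C))]].
Proof.
case: htrip => [[cl [ck cb]] hlk [czc ouc] hlb hkb].
case: hcoh => u [cu hu].
have [M hM] := @bound_above R N A u cu.1.
pose k' := fun x => k x - u (shiftA x) + M.
pose l' := fun x => k' x + c' x.
pose b' := fun x => b x - u x + M.
have hu' x : XA A x -> l x - k x - c' x = u x - u (shiftA x) by exact: hu.
have ck' : contR A k'.
  apply: contRD; last exact: contRc.
  apply: contRB => //; apply: contR_shift; exact: cu.1.
have el : (l' \- k') = c'.
  by apply/funext => x; rewrite /l' /=; lra.
exists l', k', b'; split.
- split.
  + split; first by apply: contRD => //; exact: hc'.1.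
    split => //.
    apply: contRD; last exact: contRc.
    by apply: contRB => //; exact: cu.1.
  + move=> x hx; have := hlk x hx; have := hM x hx; have := hM _ (@XA_shift _ _ _ hx).
    have := hu' x hx; rewrite /l' /k'; lra.
  + rewrite el; split => //; case: ouc => hp hou; split.
      apply: (@Hpos_coh R N A _ _ u cu) hp => x hx; exact: hu'.
    move=> w cw; have [n hn] := hou w cw; exists n.
    apply: (@Hpos_coh R N A _ _ _ (@contZMn R N A u n cu)) hn => x hx /=.
    transitivity ((l x - k x - c' x) *+ n).
      by rewrite [RHS]mulrnBl; lra.
    by rewrite hu' // mulrnBl.
  + move=> x hx.
    have -> : l' x - b' x = l x - b x by have := hu' x hx; rewrite /l' /k' /b'; lra.
    exact: hlb.
  + move=> x hx.
    have -> : k' x - b' (shiftA x) = k x - b (shiftA x) by rewrite /k' /b'; lra.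
    exact: hkb.
- move=> x hx; rewrite /l'; lra.
pose T := fun p : Tsp R N => (p.1, p.2 - u p.1 + M).
pose T2 := fun p : Tsp R N => (p.1, p.2 - - u p.1 + - M).
have TD : forall p, Dom A b p -> Dom A b' (T p).
  by move=> [x r] [hx /= hr]; split => //=; rewrite /b'; lra.
have TD2 : forall p, Dom A b' p -> Dom A b (T2 p).
  by move=> [x r] [hx /= hr]; split => //=; move: hr; rewrite /b'; lra.
have Tstep : forall p q, susp_step A l k b p q -> susp_step A l' k' b' (T p) (T q).
  move=> [x r] q [[hx /= hr] /= hl ->]; split => //=.
  - by split => //=; rewrite /b'; lra.
  - by have := hu' x hx; rewrite /l' /k'; lra.
  - by rewrite /T /=; congr pair; have := hu' x hx; rewrite /l' /k'; lra.
have Tstep2 : forall p q, susp_step A l' k' b' p q -> susp_step A l k b (T2 p) (T2 q).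
  move=> [x r] q [[hx /= hr] /= hl ->]; split => //=.
  - by split => //=; move: hr; rewrite /b'; lra.
  - by move: hl; have := hu' x hx; rewrite /l' /k'; lra.
  - by rewrite /T2 /=; congr pair; have := hu' x hx; rewrite /l' /k'; lra.
have TT2 p : T2 (T p) = p by case: p => x r; rewrite /T /T2 /=; congr pair; lra.
have T2T p : T (T2 p) = p by case: p => x r; rewrite /T /T2 /=; congr pair; lra.
exists (@lift R N A l k b l' k' b' T TD Tstep); split.
- split.
    apply: lift_cont; apply: T_cont; exact: cu.1.
  exists (@lift R N A l' k' b' l k b T2 TD2 Tstep2); split.
  + apply: lift_cont; apply: (@T_cont R N A b' (fun y => - u y) (- M)).
    have -> : (fun y => - u y) = (fun y => 0 - u y) by apply/funext => y; rewrite sub0r.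
    apply: contRB; [exact: contRc | exact: cu.1].
  + move=> C; have [p [_ hp]] := @class_rep R N A l k b C.
    apply: (susp_class_eq _ hp); rewrite -(TT2 p).
    apply: lift_mem; exact: lift_mem.
  + move=> C; have [p [_ hp]] := @class_rep R N A l' k' b' C.
    apply: (susp_class_eq _ hp); rewrite -(T2T p).
    apply: lift_mem; exact: lift_mem.
- move=> x hx.
  apply: (@susp_class_eq _ _ _ _ _ _ _ _ (x, b' x)); last exact: rst_refl.
  apply: (@lift_mem R N A l k b l' k' b' T TD Tstep _ (x, b x)); exact: rst_refl.
- move=> t C; have [p [_ hp]] := @class_rep R N A l k b C.
  apply: (@susp_class_eq _ _ _ _ _ _ _ _ (T (tshift t%:num p))).
    apply: lift_mem; exists p; split => //; exact: rst_refl.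
  exists (T p); split; first exact: lift_mem.
  have -> : T (tshift t%:num p) = tshift t%:num (T p).
    by case: p {hp} => x r; rewrite /T /tshift /=; congr pair; lra.
  exact: rst_refl.
Qed.
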